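(* The linear space $\mathbb{R}_\mathcal{I}$ (with addition $\bar a+\bar b=\langle a_c+b_c;\,a_wb_w\rangle$ and scalar multiplication $k\bar a=\langle ka_c;\,a_w^{k}\rangle$) equipped with the inner product $\bar a\diamond\bar b=a_cb_c+\ln a_w\ln b_w$ is a Hilbert space; the induced norm is $\|\bar a\|=\sqrt{\bar a\diamond\bar a}=\sqrt{a_c^2+\ln^2 a_w}$.
   Context: An interval number is a closed interval $\bar a=[a_l,a_r]$ with $a_l,a_r\in\mathbb{R}$ and $a_l<a_r$ (real numbers are not regarded as degenerate intervals). $\mathbb{R}_\mathcal{I}$ denotes the set of all interval numbers. For $\bar a=[a_l,a_r]$ put $a_c=(a_l+a_r)/2$ and $a_w=(a_r-a_l)/2>0$, and write $\bar a=\langle a_c;a_w\rangle=[a_c-a_w,a_c+a_w]$. For $k\in\mathbb{R}$, $k\bar a=\langle ka_c;a_w^k\rangle$; the zero element is $\bar 0=\langle 0;1\rangle=[-1,1]$ and subtraction is $\bar a-\bar b=\langle a_c-b_c;a_w/b_w\rangle$. *)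

(* Defs.v *)
From Stdlib Require Import Reals Lra.
Open Scope R_scope.

Record interval : Type := MkInterval {
  il : R; ir : R; il_lt_ir : il < ir }.

Definition ac (a : interval) : R := (il a + ir a) / 2.
Definition aw (a : interval) : R := (ir a - il a) / 2.

(* <c; w> = [c - w, c + w] for w > 0 *)
Lemma cw_lt (c w : R) : 0 < w -> c - w < c + w.
Proof. intros; lra. Qed.
Definition mkcw (c w : R) (H : 0 < w) : interval :=
  MkInterval (c - w) (c + w) (cw_lt c w H).

Lemma aw_pos (a : interval) : 0 < aw a.
Proof. unfold aw; destruct a as [l r H]; simpl; lra. Qed.

Lemma mul_pos_lem (x y : R) : 0 < x -> 0 < y -> 0 < x * y.
Proof. intros; apply Rmult_lt_0_compat; assumption. Qed.

Definition iadd (a b : interval) : interval :=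
  mkcw (ac a + ac b) (aw a * aw b) (mul_pos_lem _ _ (aw_pos a) (aw_pos b)).

Lemma rpow_pos (x k : R) : 0 < Rpower x k.
Proof. unfold Rpower; apply exp_pos. Qed.

Definition iscal (k : R) (a : interval) : interval :=
  mkcw (k * ac a) (Rpower (aw a) k) (rpow_pos (aw a) k).

Definition izero : interval := mkcw 0 1 Rlt_0_1.

Definition idiamond (a b : interval) : R := ac a * ac b + ln (aw a) * ln (aw b).

Definition real_vector_space (V : Type) (zero : V) (add : V -> V -> V)
  (scal : R -> V -> V) : Prop :=
  (forall u v w, add u (add v w) = add (add u v) w) /\
  (forall u v, add u v = add v u) /\
  (forall u, add u zero = u) /\
  (forall u, exists v, add u v = zero) /\
  (forall (a b : R) u, scal a (scal b u) = scal (a * b) u) /\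
  (forall u, scal 1 u = u) /\
  (forall (a : R) u v, scal a (add u v) = add (scal a u) (scal a v)) /\
  (forall (a b : R) u, scal (a + b) u = add (scal a u) (scal b u)).

Definition inner_product (V : Type) (zero : V) (add : V -> V -> V)
  (scal : R -> V -> V) (ip : V -> V -> R) : Prop :=
  (forall u v, ip u v = ip v u) /\
  (forall u v w, ip (add u v) w = ip u w + ip v w) /\
  (forall (a : R) u v, ip (scal a u) v = a * ip u v) /\
  (forall u, 0 <= ip u u) /\
  (forall u, ip u u = 0 -> u = zero).

Definition ip_norm (V : Type) (ip : V -> V -> R) (u : V) : R := sqrt (ip u u).

Definition ip_complete (V : Type) (add : V -> V -> V)
  (scal : R -> V -> V) (ip : V -> V -> R) : Prop :=
  let d u v := ip_norm V ip (add u (scal (-1) v)) in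
  forall x : nat -> V,
    (forall eps, 0 < eps -> exists N, forall m n, (N <= m)%nat -> (N <= n)%nat ->
        d (x m) (x n) < eps) ->
    exists l : V, forall eps, 0 < eps -> exists N, forall n, (N <= n)%nat ->
        d (x n) l < eps.

Definition hilbert_space (V : Type) (zero : V) (add : V -> V -> V)
  (scal : R -> V -> V) (ip : V -> V -> R) : Prop :=
  real_vector_space V zero add scal /\
  inner_product V zero add scal ip /\
  ip_complete V add scal ip.

(* Main.v *)
Require Import Defs.
From Stdlib Require Import Reals.
From Stdlib Require Import Lra Lia ProofIrrelevance.
Open Scope R_scope.

Lemma ac_mkcw c w H : ac (mkcw c w H) = c.
Proof. unfold ac, mkcw; simpl; field. Qed.
Lemma aw_mkcw c w H : aw (mkcw c w H) = w.
Proof. unfold aw, mkcw; simpl; field. Qed.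

Lemma int_eq (a b : interval) : ac a = ac b -> ln (aw a) = ln (aw b) -> a = b.
Proof.
  intros H1 H2. apply ln_inv in H2; try apply aw_pos.
  destruct a as [la ra Ha], b as [lb rb Hb]; unfold ac, aw in *; simpl in *.
  assert (la = lb) by lra. assert (ra = rb) by lra. subst.
  f_equal; apply proof_irrelevance.
Qed.

Lemma ac_add a b : ac (iadd a b) = ac a + ac b.
Proof. apply ac_mkcw. Qed.
Lemma lw_add a b : ln (aw (iadd a b)) = ln (aw a) + ln (aw b).
Proof. unfold iadd; rewrite aw_mkcw; apply ln_mult; apply aw_pos. Qed.
Lemma ac_scal k a : ac (iscal k a) = k * ac a.
Proof. apply ac_mkcw. Qed.
Lemma lw_scal k a : ln (aw (iscal k a)) = k * ln (aw a).
Proof. unfold iscal; rewrite aw_mkcw; unfold Rpower; rewrite ln_exp; ring. Qed.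
Lemma ac_zero : ac izero = 0.
Proof. apply ac_mkcw. Qed.
Lemma lw_zero : ln (aw izero) = 0.
Proof. unfold izero; rewrite aw_mkcw; apply ln_1. Qed.

Lemma sq_le_norm a b : Rabs a <= sqrt (a ^ 2 + b ^ 2).
Proof.
  rewrite <- (sqrt_Rsqr (Rabs a)) by apply Rabs_pos.
  apply sqrt_le_1_alt. rewrite <- Rsqr_abs. unfold Rsqr. nra.
Qed.

Lemma norm_le_sum a b : sqrt (a ^ 2 + b ^ 2) <= Rabs a + Rabs b.
Proof.
  rewrite <- (sqrt_Rsqr (Rabs a + Rabs b)) by (pose proof (Rabs_pos a); pose proof (Rabs_pos b); lra).
  apply sqrt_le_1_alt. unfold Rsqr.
  pose proof (Rabs_pos a); pose proof (Rabs_pos b).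
  replace (a^2) with (Rabs a * Rabs a) by (rewrite <- Rabs_mult; rewrite Rabs_right; [ring| nra]).
  replace (b^2) with (Rabs b * Rabs b) by (rewrite <- Rabs_mult; rewrite Rabs_right; [ring| nra]).
  nra.
Qed.

Lemma dist_eq u v :
  ip_norm interval idiamond (iadd u (iscal (-1) v)) =
  sqrt ((ac u - ac v) ^ 2 + (ln (aw u) - ln (aw v)) ^ 2).
Proof.
  unfold ip_norm, idiamond. rewrite ac_add, lw_add, ac_scal, lw_scal.
  f_equal; ring.
Qed.

Lemma cauchy_comp (f : nat -> R) (x : nat -> interval) :
  (forall n m, Rabs (f n - f m) <= ip_norm interval idiamond (iadd (x n) (iscal (-1) (x m)))) ->
  (forall eps, 0 < eps -> exists N, forall m n, (N <= m)%nat -> (N <= n)%nat ->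
        ip_norm interval idiamond (iadd (x m) (iscal (-1) (x n))) < eps) ->
  Cauchy_crit f.
Proof.
  intros Hle HC eps Heps. destruct (HC eps Heps) as [N HN]. exists N.
  intros n m Hn Hm. unfold R_dist. eapply Rle_lt_trans. apply Hle. apply HN; lia.
Qed.

Theorem theorem2p54 :
  hilbert_space interval izero iadd iscal idiamond /\
  (forall a : interval,
     ip_norm interval idiamond a = sqrt (ac a ^ 2 + ln (aw a) ^ 2)).
Proof.
  split; [|intros a; unfold ip_norm, idiamond; f_equal; ring].
  split; [|split].
  - repeat split; intros; try apply int_eq;
      repeat (rewrite ?ac_add, ?lw_add, ?ac_scal, ?lw_scal, ?ac_zero, ?lw_zero); try ring.
    exists (iscal (-1) u). apply int_eq;
      rewrite ?ac_add, ?lw_add, ?ac_scal, ?lw_scal, ?ac_zero, ?lw_zero; ring.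
  - repeat split; intros; unfold idiamond in *;
      rewrite ?ac_add, ?lw_add, ?ac_scal, ?lw_scal; try ring.
    + nra.
    + apply int_eq; rewrite ?ac_zero, ?lw_zero; nra.
  - intros x HC.
    assert (C1 : Cauchy_crit (fun n => ac (x n))).
    { apply (cauchy_comp _ x); [|exact HC]. intros n m; rewrite dist_eq; apply sq_le_norm. }
    assert (C2 : Cauchy_crit (fun n => ln (aw (x n)))).
    { apply (cauchy_comp _ x); [|exact HC]. intros n m; rewrite dist_eq.
      rewrite Rplus_comm; apply sq_le_norm. }
    destruct (R_complete _ C1) as [c Hc].
    destruct (R_complete _ C2) as [l Hl].
    exists (mkcw c (exp l) (exp_pos l)).
    intros eps Heps.
    destruct (Hc (eps/2) ltac:(lra)) as [N1 H1].
    destruct (Hl (eps/2) ltac:(lra)) as [N2 H2].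
    exists (max N1 N2). intros n Hn. rewrite dist_eq, ac_mkcw, aw_mkcw, ln_exp.
    eapply Rle_lt_trans. apply norm_le_sum.
    assert (A := H1 n ltac:(lia)). assert (B := H2 n ltac:(lia)).
    unfold R_dist in *. lra.
Qed.
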